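(* In the $\ell^2$ linear social choice setting, the maximum coordinate plurality rule has worst-case distortion $O(d^2)$.
   Context: Setting ($\ell^2$ linear social choice). Fix a dimension $d$. An instance consists of $n$ voters and $m$ candidates, each a vector in $\mathbb{R}^d_{\ge 0}$ with Euclidean norm $1$ (superscripts denote coordinates), with every voter vector in $\mathrm{Cone}(C)$ (nonnegative linear combinations of the candidate vectors $C$). Utility $u_v(c)=v^\top c$; each voter reports a ranking of $C$ consistent with its utilities (ties broken arbitrarily). $\mathrm{UW}(c)=\sum_v u_v(c)$. A rule may use the profile and the candidate vectors but not the voter vectors. Distortion on an instance: $\max_c\mathrm{UW}(c)/\mathrm{UW}(\text{output})$; worst-case distortion is the supremum over instances, as a function of $d$. Maximum coordinate plurality: form $\hat C\subseteq C$ containing, for each $i\in[d]$, one candidate maximizing the coordinate $c^i$ over $C$ (so $|\hat C|\le d$); restrict rankings to $\hat C$ and output a plurality winner (a candidate of $\hat C$ ranked first among $\hat C$ by the most voters, ties arbitrary). *)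

(* Defs.v *)
From HB Require Import structures.
From mathcomp Require Import all_boot all_order all_algebra.
From mathcomp Require Import all_classical all_reals.
Set Implicit Arguments. Unset Strict Implicit. Unset Printing Implicit Defensive.
Import Order.TTheory GRing.Theory Num.Theory.
Local Open Scope ring_scope.

Definition dotp (R : realType) (d : nat) (u v : 'rV[R]_d) : R :=
  \sum_(i < d) u 0 i * v 0 i.

Definition nonneg_unit (R : realType) (d : nat) (u : 'rV[R]_d) : Prop :=
  (forall i, 0 <= u 0 i) /\ \sum_(i < d) u 0 i ^+ 2 = 1.

Definition in_cone (R : realType) (d m : nat) (C : 'I_m -> 'rV[R]_d) (v : 'rV[R]_d) : Prop :=
  exists lam : 'I_m -> R, (forall j, 0 <= lam j) /\ v = \sum_(j < m) lam j *: C j.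

Definition UW (R : realType) (d n m : nat) (C : 'I_m -> 'rV[R]_d) (V : 'I_n -> 'rV[R]_d)
  (c : 'I_m) : R := \sum_(v < n) dotp (V v) (C c).

(* A profile: pos v c is the position (0 = top) of candidate c in voter v's
   ranking; it must be a bijection consistent with utilities (ties arbitrary). *)
Definition consistent_profile (R : realType) (d n m : nat) (C : 'I_m -> 'rV[R]_d)
  (V : 'I_n -> 'rV[R]_d) (pos : 'I_n -> 'I_m -> 'I_m) : Prop :=
  forall v, injective (pos v) /\
    (forall c c', dotp (V v) (C c') < dotp (V v) (C c) -> (pos v c < pos v c')%N).

(* sel i is a candidate maximizing coordinate i over C; Chat = image of sel *)
Definition coord_maximizers (R : realType) (d m : nat) (C : 'I_m -> 'rV[R]_d)
  (sel : 'I_d -> 'I_m) : Prop :=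
  forall i (c : 'I_m), C c 0 i <= C (sel i) 0 i.

Definition in_hat (d m : nat) (sel : 'I_d -> 'I_m) (c : 'I_m) : bool :=
  [exists i, sel i == c].

Definition hat_plurality_score (d n m : nat) (sel : 'I_d -> 'I_m)
  (pos : 'I_n -> 'I_m -> 'I_m) (c : 'I_m) : nat :=
  #|[set v : 'I_n | in_hat sel c &&
      [forall c' : 'I_m, in_hat sel c' ==> (pos v c <= pos v c')%N]]|.

Definition max_coord_plurality_output (d n m : nat) (sel : 'I_d -> 'I_m)
  (pos : 'I_n -> 'I_m -> 'I_m) (w : 'I_m) : Prop :=
  in_hat sel w /\
  forall c, in_hat sel c -> (hat_plurality_score sel pos c <= hat_plurality_score sel pos w)%N.

(* Main.v *)
Require Import Defs.
From HB Require Import structures.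
From mathcomp Require Import all_boot all_order all_algebra.
From mathcomp Require Import all_classical all_reals.
From mathcomp Require Import ring lra.
Import Order.TTheory GRing.Theory Num.Theory.
Local Open Scope ring_scope.

Lemma dot_ge0 (R : realType) d (u v : 'rV[R]_d) :
  nonneg_unit u -> nonneg_unit v -> 0 <= dotp u v.
Proof.
move=> [u0 _] [v0 _]; apply: sumr_ge0 => i _; exact: mulr_ge0.
Qed.

Lemma dot_le1 (R : realType) d (u v : 'rV[R]_d) :
  nonneg_unit u -> nonneg_unit v -> dotp u v <= 1.
Proof.
move=> [_ u1] [_ v1].
have -> : (1 : R) = \sum_(i < d) (u 0 i ^+ 2 + v 0 i ^+ 2) / 2.
  by rewrite -mulr_suml big_split /= u1 v1; field.
apply: ler_sum => i _; set a := u 0 i; set b := v 0 i.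
have : 0 <= (a - b) ^+ 2 by apply: sqr_ge0.
move=> h; nra.
Qed.

Lemma key (R : realType) d m (C : 'I_m -> 'rV[R]_d) (sel : 'I_d -> 'I_m)
  (v : 'rV[R]_d) (i0 : 'I_d) :
  (forall c, nonneg_unit (C c)) -> nonneg_unit v -> in_cone C v ->
  coord_maximizers C sel ->
  exists i, 1 <= d%:R * dotp v (C (sel i)).
Proof.
move=> hC [v0 v1] [lam [lam0 hv']] hsel.
have hv : forall i, v 0 i = \sum_j lam j * C j 0 i.
  by move=> i; rewrite hv' summxE; apply: eq_bigr => j _; rewrite mxE.
pose M i := C (sel i) 0 i.
have M0 : forall i, 0 <= M i by move=> i; case: (hC (sel i)) => h _; exact: h.
have c1 : forall j, 1 <= \sum_i C j 0 i * M i.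
  move=> j; case: (hC j) => [cj0 cj1]; rewrite -cj1; apply: ler_sum => i _.
  rewrite expr2; apply: ler_wpM2l => //; exact: hsel.
pose s := \sum_i v 0 i * M i.
pose L := \sum_j lam j.
have s_ge : L <= s.
  rewrite /s (eq_bigr (fun i => \sum_j lam j * (C j 0 i * M i))); last first.
    by move=> i _; rewrite hv mulr_suml; apply: eq_bigr => j _; rewrite mulrA.
  rewrite exchange_big /=; apply: ler_sum => j _; rewrite -mulr_sumr.
  rewrite -{1}(mulr1 (lam j)); apply: ler_wpM2l => //; exact: c1.
have one_le : 1 <= L * s.
  rewrite -v1.
  rewrite (eq_bigr (fun i => \sum_j lam j * (v 0 i * C j 0 i))); last first.
    move=> i _; transitivity (v 0 i * \sum_j lam j * C j 0 i); first by rewrite expr2 -hv.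
    by rewrite mulr_sumr; apply: eq_bigr => j _; rewrite mulrCA.
  rewrite exchange_big /= /L mulr_suml; apply: ler_sum => j _; rewrite -mulr_sumr.
  apply: ler_wpM2l => //; apply: ler_sum => i _; apply: ler_wpM2l => //; exact: hsel.
have s0 : 0 <= s by apply: sumr_ge0 => i _; apply: mulr_ge0.
have s1 : 1 <= s by nra.
have dotlb : forall i, v 0 i * M i <= dotp v (C (sel i)).
  move=> i; rewrite /dotp (bigD1 i) //= lerDl; apply: sumr_ge0 => k _.
  by apply: mulr_ge0 => //; case: (hC (sel i)).
case: (boolP [exists i, 1 <= d%:R * dotp v (C (sel i))]) => [/existsP [i hi]|/existsPn hn].
  by exists i.
exfalso.
have lt : d%:R * s < \sum_(i < d) (1 : R).
  rewrite /s mulr_sumr; apply: ltr_sum; first by apply/hasP; exists i0; rewrite ?mem_index_enum.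
  move=> i _; have := hn i; rewrite -ltNge => h; apply: le_lt_trans h.
  by apply: ler_wpM2l => //; apply: dotlb.
move: lt; rewrite sumr_const card_ord -[1 *+ d]mulr_natl mulr1.
have d0 : (0 : R) <= d%:R by [].
nra.
Qed.

Lemma natr_in (R : realType) (T : finType) (S : {set T}) :
  (#|S|%:R : R) = \sum_(x : T) ((x \in S)%:R : R).
Proof.
rewrite -sumr_const big_mkcond /=.
by apply: eq_bigr => x _; case: (x \in S).
Qed.

Theorem theorem14 (R : realType) :
  exists K : R, 0 < K /\
  forall (d n m : nat) (C : 'I_m -> 'rV[R]_d) (V : 'I_n -> 'rV[R]_d)
    (pos : 'I_n -> 'I_m -> 'I_m) (sel : 'I_d -> 'I_m) (w : 'I_m),
    (forall c, nonneg_unit (C c)) ->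
    (forall v, nonneg_unit (V v)) ->
    (forall v, in_cone C (V v)) ->
    consistent_profile C V pos ->
    coord_maximizers C sel ->
    max_coord_plurality_output sel pos w ->
    forall c : 'I_m, UW C V c <= K * (d%:R) ^+ 2 * UW C V w.
Proof.
exists 1; split; first by [].
move=> d n m C V pos sel w hC hV hcone hpos hsel [hw wmax] c.
case: (pickP (fun i : 'I_d => true)) => [i0 _|h0]; last first.
  exfalso; case: (hC c) => _; rewrite big1 => [/eqP|i]; first by rewrite eq_sym oner_eq0.
  by have := h0 i.
pose S (x : 'I_m) := [set v : 'I_n | in_hat sel x &&
      [forall c' : 'I_m, in_hat sel c' ==> (pos v x <= pos v c')%N]].
have scoreE : forall x, hat_plurality_score sel pos x = #|S x| by [].
have A : UW C V c <= n%:R.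
  rewrite /UW -[n in n%:R]card_ord -sumr_const; apply: ler_sum => v _.
  exact: dot_le1.
have B : (n%:R : R) <= \sum_(i < d) (#|S (sel i)|%:R : R).
  rewrite -[n in n%:R]card_ord -sumr_const.
  rewrite (eq_bigr (fun i => \sum_(v : 'I_n) ((v \in S (sel i))%:R : R))); last first.
    by move=> i _; rewrite natr_in.
  rewrite exchange_big /=; apply: ler_sum => v _.
  have Hi0 : in_hat sel (sel i0) by apply/existsP; exists i0.
  have [j Pj minj] := arg_minnP (pos v) Hi0.
  move: (Pj) => /existsP [i /eqP ij].
  rewrite (bigD1 i) //= -[X in X <= _]addr0; apply: lerD; last first.
    by apply: sumr_ge0 => k _; apply: ler0n.
  rewrite ij inE Pj /=; set b := [forall _, _]; have -> : b; last by []; apply/forallP => c'; apply/implyP => hc'; exact: minj.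
have Cc : \sum_(i < d) (#|S (sel i)|%:R : R) <= d%:R * (#|S w|%:R).
  apply: (@le_trans _ _ (\sum_(i < d) (#|S w|%:R : R))); last first.
    by rewrite sumr_const card_ord mulr_natl.
  apply: ler_sum => i _.
  rewrite ler_nat -!scoreE; apply: wmax; apply/existsP; exists i; by [].
have D : (#|S w|%:R : R) <= d%:R * UW C V w.
  rewrite natr_in /UW mulr_sumr; apply: ler_sum => v _.
  case: (boolP (v \in S w)) => hv; last by apply: mulr_ge0 => //; exact: dot_ge0.
  have [i hi] := @key R d m C sel (V v) i0 hC (hV v) (hcone v) hsel.
  apply: (le_trans hi); apply: ler_wpM2l => //.
  rewrite leNgt; apply/negP => lt.
  have := (hpos v).2 _ _ lt.
  move: hv; rewrite inE => /andP [_ /forallP /(_ (sel i))].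
  have -> : in_hat sel (sel i) by apply/existsP; exists i.
  by move=> /= h1 h2; move: (leq_trans h2 h1); rewrite ltnn.
have d0 : (0 : R) <= d%:R by [].
have Uw0 : 0 <= UW C V w by apply: sumr_ge0 => v _; exact: dot_ge0.
rewrite mul1r expr2 -mulrA.
apply: (le_trans A); apply: (le_trans B); apply: (le_trans Cc).
by apply: ler_wpM2l.
Qed.
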